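(* Let $(A,\vee,\wedge,\bot,\top)$ be a bounded distributive lattice, and let $\mathcal{L}=(Expr_{\mathcal{L}},Th_{\mathcal{L}},\mathcal{C}_{\mathcal{L}})$ with $Expr_{\mathcal{L}}=A$, $Th_{\mathcal{L}}$ the set of proper filters of $A$, and $\mathcal{C}_{\mathcal{L}}=\{\vee,\wedge,\bot,\top\}$. Then $\mathcal{L}$ is a distributive abstract logic.
   Context: An abstract logic is a triple $\mathcal{L}=(Expr_{\mathcal{L}},Th_{\mathcal{L}},\mathcal{C}_{\mathcal{L}})$ where $Expr_{\mathcal{L}}$ is a set, $Th_{\mathcal{L}}$ a non-empty set of subsets of $Expr_{\mathcal{L}}$ (theories) with $\bigcap\mathcal{T}\in Th_{\mathcal{L}}$ for every non-empty $\mathcal{T}\subseteq Th_{\mathcal{L}}$, and $\mathcal{C}_{\mathcal{L}}$ a set of operations on $Expr_{\mathcal{L}}$. $\mathcal{L}$ is closed under union of chains if the union of every non-empty chain of theories is a theory. A theory $T$ is totally prime if whenever $T=\bigcap\mathcal{T}$ for a non-empty $\mathcal{T}\subseteq Th_{\mathcal{L}}$ (of any cardinality), $T\in\mathcal{T}$; $TPTh_{\mathcal{L}}$ is the set of totally prime theories. A distributive abstract logic is an abstract logic closed under union of chains with binary connectives $\vee,\wedge\in\mathcal{C}_{\mathcal{L}}$ such that for all $a,b$ and all $T\in TPTh_{\mathcal{L}}$: $a\vee b\in T$ iff $a\in T$ or $b\in T$; $a\wedge b\in T$ iff $a\in T$ and $b\in T$. *)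

(* Defs.v *)
From HB Require Import structures.
From mathcomp Require Import all_boot all_order.
From mathcomp Require Import boolp classical_sets.

Set Implicit Arguments.
Unset Strict Implicit.
Unset Printing Implicit Defensive.

Import Order.TTheory.
Local Open Scope classical_set_scope.

Definition operation (E : Type) := {n : nat & ('I_n -> E) -> E}.

Definition op0 (E : Type) (c : E) : operation E :=
  existT (fun n => ('I_n -> E) -> E) 0 (fun _ => c).
Definition op2 (E : Type) (f : E -> E -> E) : operation E :=
  existT (fun n => ('I_n -> E) -> E) 2
    (fun v => f (v ord0) (v (@Ordinal 2 1 isT))).

Definition abstract_logic (E : Type) (Th : set (set E)) (C : set (operation E))
  : Prop :=
  Th !=set0 /\
  forall F : set (set E), F !=set0 -> F `<=` Th -> Th (\bigcap_(T in F) T).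

Definition closed_under_union_of_chains (E : Type) (Th : set (set E)) : Prop :=
  forall F : set (set E), F !=set0 -> F `<=` Th ->
    (forall T1 T2, F T1 -> F T2 -> T1 `<=` T2 \/ T2 `<=` T1) ->
    Th (\bigcup_(T in F) T).

Definition totally_prime (E : Type) (Th : set (set E)) (T : set E) : Prop :=
  Th T /\
  forall F : set (set E), F !=set0 -> F `<=` Th ->
    T = \bigcap_(U in F) U -> F T.

Definition distributive_abstract_logic (E : Type) (Th : set (set E))
  (C : set (operation E)) : Prop :=
  abstract_logic Th C /\ closed_under_union_of_chains Th /\
  exists (vee wedge : E -> E -> E),
    C (op2 vee) /\ C (op2 wedge) /\
    forall (a b : E) (T : set E), totally_prime Th T ->
      (T (vee a b) <-> T a \/ T b) /\ (T (wedge a b) <-> T a /\ T b).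

Definition lattice_filter (d : Order.disp_t) (L : latticeType d) (F : set L)
  : Prop :=
  F !=set0 /\
  (forall x y : L, F x -> (x <= y)%O -> F y) /\
  (forall x y : L, F x -> F y -> F (Order.meet x y)).

Definition proper_filter (d : Order.disp_t) (L : latticeType d) (F : set L)
  : Prop :=
  lattice_filter F /\ F <> setT.

Definition lattice_connectives (d : Order.disp_t) (L : tbLatticeType d)
  : set (operation L) :=
  [set op2 (@Order.join d L); op2 (@Order.meet d L);
       op0 (@Order.bottom d L); op0 (@Order.top d L)].

(* Main.v *)
Require Import Defs.
From HB Require Import structures.
From mathcomp Require Import all_boot all_order.
From mathcomp Require Import boolp classical_sets.

Set Implicit Arguments.
Unset Strict Implicit.
Unset Printing Implicit Defensive.
Import Order.TTheory.
Local Open Scope classical_set_scope.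

Section Aux.
Variables (d : Order.disp_t) (A : tbDistrLatticeType d).
Hypothesis nontriv : (@Order.bottom d A) <> (@Order.top d A).

Lemma filter_top (F : set A) : lattice_filter F -> F Order.top.
Proof. by case=> [[x Fx] [up _]]; apply: (up x) => //; apply: lex1. Qed.

Lemma proper_nobot (F : set A) : proper_filter F -> ~ F Order.bottom.
Proof.
case=> [[_ [up _]] nT] Fb; apply: nT; apply/seteqP; split=> // x _.
by apply: (up _ _ Fb); apply: le0x.
Qed.

Lemma nobot_proper (F : set A) : lattice_filter F -> ~ F Order.bottom ->
  proper_filter F.
Proof. by move=> fF nb; split=> // FT; apply: nb; rewrite FT. Qed.

Definition gen (T : set A) (a : A) : set A :=
  [set x | exists2 t, T t & (Order.meet t a <= x)%O].

Lemma gen_filter (T : set A) a : lattice_filter T -> lattice_filter (gen T a).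
Proof.
move=> fT; have Ttop := filter_top fT; case: fT => [_ [up mc]].
split; first by exists Order.top; exists Order.top => //; apply: lex1.
split.
  by move=> x y [t Tt le1] le2; exists t => //; apply: le_trans le1 le2.
move=> x y [t1 T1 l1] [t2 T2 l2]; exists (Order.meet t1 t2); first exact: mc.
rewrite lexI; apply/andP; split.
  apply: le_trans l1; rewrite lexI leIr andbT.
  by apply: le_trans (leIl _ _) (leIl _ _).
apply: le_trans l2; rewrite lexI leIr andbT.
by apply: le_trans (leIl _ _) (leIr _ _).
Qed.

Lemma gen_sub (T : set A) a : T `<=` gen T a.
Proof. by move=> x Tx; exists x => //; apply: leIl. Qed.

Lemma gen_a (T : set A) a : lattice_filter T -> gen T a a.
Proof. by move=> fT; exists Order.top; [apply: filter_top|apply: leIr]. Qed.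

Lemma gen_cap (T : set A) a b : lattice_filter T -> T (Order.join a b) ->
  T = gen T a `&` gen T b.
Proof.
case=> [_ [up mc]] Tab; apply/seteqP; split.
  by move=> x Tx; split; apply: gen_sub.
move=> x [[t1 T1 l1] [t2 T2 l2]].
pose t := Order.meet t1 t2.
have Tt : T t by apply: mc.
apply: (up (Order.meet t (Order.join a b))); first exact: mc.
rewrite meetUr leUx; apply/andP; split.
  apply: le_trans l1; apply: leI2 => //; exact: leIl.
apply: le_trans l2; apply: leI2 => //; exact: leIr.
Qed.

End Aux.

Theorem lemma3p8 (d : Order.disp_t) (A : tbDistrLatticeType d)
  (nontriv : (@Order.bottom d A) <> (@Order.top d A)) :
  distributive_abstract_logic (@proper_filter d A) (@lattice_connectives d A).
Proof.
split.
  split.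
    exists [set x | x = Order.top]; apply: nobot_proper; last by [].
    split; first by exists Order.top.
    split; first by move=> x y -> le; apply/eqP; rewrite eq_le lex1.
    by move=> x y -> ->; rewrite meetxx.
  move=> F [T0 FT0] sub.
  apply: nobot_proper; last first.
    by move=> H; apply: (proper_nobot (sub _ FT0)); apply: H.
  split.
    exists Order.top => T FT; apply: filter_top; exact: (sub _ FT).1.
  split.
    move=> x y Hx le T FT; case: (sub _ FT) => [[_ [up _]] _].
    by apply: up le; apply: Hx.
  move=> x y Hx Hy T FT; case: (sub _ FT) => [[_ [_ mc]] _].
  by apply: mc; [apply: Hx|apply: Hy].
split.
  move=> F [T0 FT0] sub ch.
  apply: nobot_proper; last first.
    by case=> T FT Tb; apply: (proper_nobot (sub _ FT)).
  split.
    exists Order.top, T0 => //; apply: filter_top; exact: (sub _ FT0).1.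
  split.
    move=> x y [T FT Tx] le; exists T => //.
    by case: (sub _ FT) => [[_ [up _]] _]; apply: up le.
  move=> x y [T1 F1 Tx] [T2 F2 Ty].
  case: (ch _ _ F1 F2) => s.
    exists T2 => //; case: (sub _ F2) => [[_ [_ mc]] _]; apply: mc => //.
    exact: s.
  exists T1 => //; case: (sub _ F1) => [[_ [_ mc]] _]; apply: mc => //.
  exact: s.
exists (@Order.join d A), (@Order.meet d A).
split; first by rewrite /lattice_connectives; left; left; left.
split; first by rewrite /lattice_connectives; left; left; right.
move=> a b T [pT tp].
have fT := pT.1; case: (fT) => [_ [up mc]].
split; split.
- move=> Tab; apply: contrapT => nab.
  have na : ~ T a by move=> ?; apply: nab; left.
  have nb : ~ T b by move=> ?; apply: nab; right.
  have eq := gen_cap fT Tab.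
  have ga := gen_a a fT; have gb := gen_a b fT.
  have [/eqP ha|ha] := boolP (gen T a == setT).
    by apply: nb; rewrite eq ha setTI.
  have [/eqP hb|hb] := boolP (gen T b == setT).
    by apply: na; rewrite eq hb setIT.
  have pa : proper_filter (gen T a) by split; [exact: gen_filter|exact/eqP].
  have pb : proper_filter (gen T b) by split; [exact: gen_filter|exact/eqP].
  have ne : [set gen T a; gen T b] !=set0 by exists (gen T a); left.
  have sb : [set gen T a; gen T b] `<=` @proper_filter d A by move=> U [->|->].
  have ec : T = \bigcap_(U in [set gen T a; gen T b]) U.
    rewrite {1}eq; apply/seteqP; split.
      by move=> x [Hx1 Hx2] U [->|->].
    by move=> x Hx; split; apply: Hx; [left|right].
  by case: (tp _ ne sb ec) => E; [apply: na; rewrite E|apply: nb; rewrite E].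
- by case=> H; [apply: up H (leUl _ _)|apply: up H (leUr _ _)].
- by move=> H; split; [apply: up H (leIl _ _)|apply: up H (leIr _ _)].
- by case=> Ha Hb; apply: mc.
Qed.
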